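(* Let $(A,W)$ be a Pratt comonoid, let $x_0\supseteq x_1\supseteq\cdots$ be an $\omega$-indexed descending chain of elements of $W$, and let $y_0\subseteq y_1\subseteq\cdots$ be an $\omega$-indexed ascending chain of elements of $W$. Suppose that $\bigcap_{m\in\omega}x_m=\emptyset$, and that for no pair $(m,n)\in\omega\times\omega$ does $y_n$ contain $x_m\cap\bigcup_{i\in\omega}y_i$. Then $W$ has at least continuum cardinality; in fact $W$ contains a complete sublattice isomorphic to the lattice of all subsets of $\omega$.
   Context: A Pratt comonoid is a pair $(A,W)$ where $A$ is a set and $W$ is a set of subsets of $A$ such that (i) $\emptyset\in W$ and $A\in W$; (ii) whenever $C\subseteq A\times A$ is such that for every $a\in A$ both the $a$-th row $\{b\mid (a,b)\in C\}$ and the $a$-th column $\{b\mid (b,a)\in C\}$ belong to $W$ (a crossword over $W$), the diagonal $\{b\mid (b,b)\in C\}$ also belongs to $W$. A complete sublattice of $W$ is a subset of $W$ closed under arbitrary (possibly infinite) unions and intersections taken in the power set of $A$, not necessarily containing $\emptyset$ or $A$. *)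

(* Defs.v *)
From mathcomp Require Export all_boot.
From mathcomp Require Export boolp classical_sets.
Set Implicit Arguments. Unset Strict Implicit. Unset Printing Implicit Defensive.
Local Open Scope classical_set_scope.

Definition crow (A : Type) (C : set (A * A)) (a : A) : set A := [set b | C (a, b)].
Definition ccol (A : Type) (C : set (A * A)) (a : A) : set A := [set b | C (b, a)].
Definition cdiag (A : Type) (C : set (A * A)) : set A := [set b | C (b, b)].

Definition crossword (A : Type) (W : set (set A)) (C : set (A * A)) : Prop :=
  forall a, W (crow C a) /\ W (ccol C a).

Definition pratt_comonoid (A : Type) (W : set (set A)) : Prop :=
  [/\ W set0, W setT &
      forall C : set (A * A), crossword W C -> W (cdiag C)].

Definition complete_sublattice (A : Type) (W S : set (set A)) : Prop :=
  S `<=` W /\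
  forall F : set (set A), F `<=` S -> F !=set0 ->
    S (\bigcup_(X in F) X) /\ S (\bigcap_(X in F) X).

(* S (ordered by inclusion) is order-isomorphic (hence lattice-isomorphic)
   to the power set of omega. *)
Definition iso_to_powerset_nat (A : Type) (S : set (set A)) : Prop :=
  exists phi : set nat -> set A,
    (forall X Y : set nat, phi X `<=` phi Y <-> X `<=` Y) /\
    S = range phi.

(* Main.v *)
Require Import Defs.
From mathcomp Require Import all_boot boolp classical_sets.
From Stdlib Require Import Classical.
Local Open Scope classical_set_scope.

Section Aux.
Variables (A : Type) (W : set (set A)).
Hypothesis HW : pratt_comonoid W.

Lemma WT : W setT. Proof. by case: HW. Qed.
Lemma W0 : W set0. Proof. by case: HW. Qed.

Lemma WU U V : W U -> W V -> W (U `|` V).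
Proof.
move=> HU HV; case: HW => _ HT Hc.
have -> : U `|` V = cdiag [set ab | U ab.1 \/ V ab.2] by [].
apply: Hc => a; split.
- case: (classic (U a)) => Ua.
  + have -> : crow [set ab | U ab.1 \/ V ab.2] a = setT.
      by apply/seteqP; split => b //= _; left.
    exact: HT.
  + have -> : crow [set ab | U ab.1 \/ V ab.2] a = V.
      by apply/seteqP; split => b /=; [case|right].
    exact: HV.
- case: (classic (V a)) => Va.
  + have -> : ccol [set ab | U ab.1 \/ V ab.2] a = setT.
      by apply/seteqP; split => b //= _; right.
    exact: HT.
  + have -> : ccol [set ab | U ab.1 \/ V ab.2] a = U.
      by apply/seteqP; split => b /=; [case|left].
    exact: HU.
Qed.

Lemma least_ex (P : nat -> Prop) : (exists n, P n) -> exists n, P n /\ forall k, P k -> n <= k.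
Proof.
move=> [n0 Pn0]; apply: NNPP => H.
have : forall n k, k <= n -> ~ P k.
  elim=> [|n IH] k.
    rewrite leqn0 => /eqP -> P0; apply: H; exists 0; split => //.
  rewrite leq_eqVlt => /orP [/eqP -> Pn|]; last exact: IH.
  apply: H; exists n.+1; split => // j Pj; rewrite leqNgt; apply/negP => lt.
  exact: (IH j lt Pj).
by move/(_ n0 n0 (leqnn _)).
Qed.

Variables (x y : nat -> set A).
Hypotheses (Wx : forall m, W (x m)) (Dx : forall m, x m.+1 `<=` x m)
  (Wy : forall n, W (y n)) (Ix : \bigcap_m x m = set0).

Lemma xmono m n : m <= n -> x n `<=` x m.
Proof.
move/subnK <-; elim: (n - m) => [//|k IH] b /=.
by rewrite addSn => /Dx /IH.
Qed.

Lemma xout a : exists M, ~ x M a.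
Proof.
apply: NNPP => H.
have : (\bigcap_m x m) a by move=> m _; apply: NNPP => H'; apply: H; exists m.
by rewrite Ix.
Qed.

Lemma fin_union M (P : nat -> Prop) (q : nat -> nat) :
  W [set b | exists j, j < M /\ P j /\ y (q j) b].
Proof.
elim: M => [|M IH].
  have -> : [set b | exists j, j < 0 /\ P j /\ y (q j) b] = set0.
    by apply/seteqP; split => b //= [j []].
  exact: W0.
case: (classic (P M)) => PM.
  have -> : [set b | exists j, j < M.+1 /\ P j /\ y (q j) b] =
    [set b | exists j, j < M /\ P j /\ y (q j) b] `|` y (q M).
    apply/seteqP; split => b /=.
      move=> [j [lt [Pj yb]]]; move: lt; rewrite ltnS leq_eqVlt => /orP [/eqP E|lt].
        by right; rewrite -E.
      by left; exists j.
    case=> [[j [lt [Pj yb]]]|yb]; first by exists j; split => //; apply: ltnW.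
    by exists M.
  exact: WU.
have -> : [set b | exists j, j < M.+1 /\ P j /\ y (q j) b] =
    [set b | exists j, j < M /\ P j /\ y (q j) b].
  apply/seteqP; split => b /=.
    move=> [j [lt [Pj yb]]]; move: lt; rewrite ltnS leq_eqVlt => /orP [/eqP E|lt].
      by rewrite E in Pj.
    by exists j.
  by move=> [j [lt [Pj yb]]]; exists j; split => //; apply: ltnW.
exact: IH.
Qed.

Lemma quad_union (p q : nat -> nat) (J : set nat) :
  (forall j, j <= p j) ->
  W [set b | exists j, J j /\ x (p j) b /\ y (q j) b].
Proof.
move=> pj; case: HW => _ _ Hc.
set C := [set ab : A * A | exists j, J j /\ x (p j) ab.1 /\ y (q j) ab.2].
have -> : [set b | exists j, J j /\ x (p j) b /\ y (q j) b] = cdiag C by [].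
apply: Hc => a; split.
- have [M HM] := xout a.
  have -> : crow C a = [set b | exists j, j < M /\ (J j /\ x (p j) a) /\ y (q j) b].
    apply/seteqP; split => b /=.
      move=> [j [Jj [xa yb]]]; exists j; split => //.
      rewrite ltnNge; apply/negP => le; apply: HM.
      exact: (xmono _ _ (leq_trans le (pj j)) _ xa).
    by move=> [j [_ [[Jj xa] yb]]]; exists j.
  exact: fin_union.
- case: (classic (exists j, J j /\ y (q j) a)) => [ex|nex].
  + have [v [[j0 [[Jj0 yj0] pv]] vmin]] :=
      least_ex (fun v => exists j, (J j /\ y (q j) a) /\ p j = v)
        (let: ex_intro j H := ex in ex_intro _ (p j) (ex_intro _ j (conj H erefl))).
    have -> : ccol C a = x v.
      apply/seteqP; split => b /=.
        move=> [j [Jj [xb ya]]].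
        exact: (xmono _ _ (vmin (p j) (ex_intro _ j (conj (conj Jj ya) erefl))) _ xb).
      by move=> xb; exists j0; rewrite pv.
    exact: Wx.
  + have -> : ccol C a = set0.
      apply/seteqP; split => b //= [j [Jj [_ ya]]]; apply: nex; by exists j.
    exact: W0.
Qed.

End Aux.

Arguments xout {A x} Ix a.
Arguments xmono {A x} Dx {m n} _ _ _.
Arguments quad_union {A W} HW {x y} Wx Dx Wy Ix {p} q J _.
Arguments WU {A W} HW {U V} _ _.

Fixpoint seqg {A : Type} (g : nat * nat -> A * nat * nat) (k : nat) : A * nat * nat :=
  match k with
  | 0 => g (0, 0)
  | k'.+1 => let t := seqg g k' in g (t.1.2.+1, t.2)
  end.

Lemma strict_mono (f : nat -> nat) : (forall k, f k < f k.+1) ->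
  forall j k, j < k -> f j < f k.
Proof.
move=> H j; elim=> [//|k IH]; rewrite ltnS leq_eqVlt => /orP [/eqP ->|lt]//.
exact: ltn_trans (IH lt) (H k).
Qed.

Lemma strict_ge (f : nat -> nat) : (forall k, f k < f k.+1) -> forall k, k <= f k.
Proof. move=> H; elim=> [//|k IH]; exact: leq_ltn_trans IH (H k). Qed.

Lemma ymono {A : Type} {y : nat -> set A} : (forall n, y n `<=` y n.+1) ->
  forall {m n}, m <= n -> y m `<=` y n.
Proof.
move=> Dy m n /subnK <-; elim: (n - m) => [//|k IH] b /= /IH.
by rewrite addSn; apply: Dy.
Qed.

Theorem proposition7p3 (A : Type) (W : set (set A)) (x y : nat -> set A) :
  pratt_comonoid W ->
  (forall m, W (x m)) -> (forall m, x m.+1 `<=` x m) ->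
  (forall n, W (y n)) -> (forall n, y n `<=` y n.+1) ->
  \bigcap_m x m = set0 ->
  (forall m n : nat, ~ (x m `&` \bigcup_i y i `<=` y n)) ->
  (exists f : set nat -> set A, injective f /\ forall X, W (f X)) /\
  (exists S : set (set A), complete_sublattice W S /\ iso_to_powerset_nat S).
Proof.
move=> HW Wx Dx Wy Dy Ix Hxy.
pose R (p : nat * nat) (t : A * nat * nat) :=
  p.1 <= t.1.2 /\ p.2 < t.2 /\ x t.1.2 t.1.1 /\ ~ x t.1.2.+1 t.1.1 /\
  y t.2 t.1.1 /\ ~ y t.2.-1 t.1.1.
have Hpick : forall p, exists t, R p t.
  move=> [M N].
  have [a [xa [[i _ yi] nya]]] : exists a, x M a /\ (\bigcup_i y i) a /\ ~ y N a.
    apply: NNPP => H; apply: (Hxy M N) => a [xa ya]; apply: NNPP => nya.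
    by apply: H; exists a.
  have [K [nxK Kmin]] := least_ex (fun K => ~ x K a) (xout Ix a).
  have MK : M < K.
    rewrite ltnNge; apply/negP => le; exact: nxK (xmono Dx le _ xa).
  have [n [yn nmin]] := least_ex (fun n => y n a) (ex_intro _ i yi).
  have Nn : N < n.
    rewrite ltnNge; apply/negP => le; exact: nya (ymono Dy le _ yn).
  exists (a, K.-1, n); rewrite /R /=.
  have KE : K.-1.+1 = K by rewrite prednK //; exact: leq_ltn_trans (leq0n M) MK.
  split; first by rewrite -ltnS KE.
  split => //; split.
    apply: NNPP => H; by move: (Kmin _ H); rewrite -{1}KE ltnn.
  rewrite KE; split => //; split => // H.
  have := nmin _ H; rewrite -{1}(prednK (leq_ltn_trans (leq0n N) Nn)) ltnn; by [].
have [g Hg] := choice Hpick.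
pose s := seqg g.
pose a k := (s k).1.1. pose m k := (s k).1.2. pose n k := (s k).2.
have Hs : forall k, x (m k) (a k) /\ ~ x (m k).+1 (a k) /\ y (n k) (a k) /\ ~ y (n k).-1 (a k).
  by move=> [|k]; [have := Hg (0,0) | have := Hg ((s k).1.2.+1, (s k).2)]; move=> [_ [_ H]].
have mS : forall k, m k < m k.+1.
  by move=> k; have [H _] := Hg ((s k).1.2.+1, (s k).2).
have nS : forall k, n k < n k.+1.
  by move=> k; have [_ [H _]] := Hg ((s k).1.2.+1, (s k).2).
have mlt := strict_mono _ mS. have nlt := strict_mono _ nS.
have mge := strict_ge _ mS.
have mle : forall j k, j <= k -> m j <= m k.
  move=> j k; rewrite leq_eqVlt => /orP [/eqP ->//|lt]; exact: ltnW (mlt _ _ lt).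
have npos : forall k, 0 < n k.
  move=> [|k]; [by have [_ [H _]] := Hg (0,0) | exact: leq_ltn_trans (leq0n _) (nS k)].
have nle : forall j k, j < k -> n j <= (n k).-1.
  move=> j k lt; rewrite -ltnS prednK //; exact: nlt.
have nle' : forall j k, j <= k -> (n j).-1 <= (n k).-1.
  move=> j k; rewrite leq_eqVlt => /orP [/eqP ->//|lt].
  exact: leq_trans (leq_pred _) (nle _ _ lt).
have K2 : forall j k b, ~ x (m j).+1 b -> ~ y (n j).-1 b -> x (m k) b -> y (n k) b -> j = k.
  move=> j k b nx ny xk yk; case: (ltngtP j k) => [lt|lt|//].
    by case: nx; exact: (xmono Dx (mlt _ _ lt) b xk).
  by case: ny; exact: (ymono Dy (nle _ _ lt) b yk).
pose U0 (X : set nat) := [set b | exists k, X k /\ x (m k) b /\ y (n k) b].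
pose U1 := [set b | exists k, setT k /\ x (m k).+1 b /\ y (n k) b].
pose U2 := [set b | exists k, setT k /\ x (m k) b /\ y (n k).-1 b].
pose B := U1 `|` U2.
pose f X := U0 X `|` B.
have Wf : forall X, W (f X).
  move=> X; apply: (WU HW); first exact: (quad_union HW Wx Dx Wy Ix n X mge).
  apply: (WU HW).
    apply: (quad_union HW Wx Dx Wy Ix n setT (p := fun k => (m k).+1)).
    by move=> k; apply: leqW.
  exact: (quad_union HW Wx Dx Wy Ix (fun k => (n k).-1) setT mge).
have K1 : forall b k, ~ B b -> x (m k) b -> y (n k) b -> ~ x (m k).+1 b /\ ~ y (n k).-1 b.
  move=> b k nB xb yb; split => H; apply: nB; [left|right]; by exists k.
have aB : forall k, ~ B (a k).
  move=> k; have [xa [nxa [ya nya]]] := Hs k.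
  case=> [[j [_ [xj yj]]]|[j [_ [xj yj]]]].
    case: (leqP k j) => le.
      by apply: nxa; exact: (xmono Dx (mle _ _ le : (m k).+1 <= (m j).+1) _ xj).
    by apply: nya; exact: (ymono Dy (nle _ _ le) _ yj).
  case: (leqP j k) => le.
    by apply: nya; exact: (ymono Dy (nle' _ _ le) _ yj).
  by apply: nxa; exact: (xmono Dx (mlt _ _ le) _ xj).
have aU : forall X k, X k -> f X (a k).
  by move=> X k Xk; left; exists k; have [? [_ [? _]]] := Hs k.
have iso : forall X Y, f X `<=` f Y <-> X `<=` Y.
  move=> X Y; split.
  - move=> H k Xk; have := H _ (aU X k Xk); case => [[j [Yj [xj yj]]]|Bk]; last by case: (aB k).
    have [_ [nxa [_ nya]]] := Hs k; by rewrite (K2 k j _ nxa nya xj yj).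
  - move=> H b [[k [Xk rest]]|Bb]; [left; exists k; split=> //; exact: H | by right].
split.
  exists f; split => // X Y E; apply/seteqP; split; apply/iso; rewrite E //.
exists (range f); split; last by exists f; split.
split; first by move=> Z [X _ <-]; exact: Wf.
move=> F FS [Z0 FZ0].
pose G := [set X | F (f X)].
have [X0 _ EX0] := FS _ FZ0.
split.
- exists (\bigcup_(X in G) X) => //; apply/seteqP; split => b.
  + case=> [[k [[X GX Xk] q]]|Bb].
      by exists (f X) => //; left; exists k.
    by exists Z0 => //; rewrite -EX0; right.
  + case=> Z FZ Zb; have [X _ EX] := FS _ FZ; rewrite -EX in Zb FZ.
    case: Zb => [[k [Xk q]]|Bb]; last by right.
    by left; exists k; split=> //; exists X.
- exists (\bigcap_(X in G) X) => //; apply/seteqP; split => b.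
  + move=> Hb Z FZ; have [X _ EX] := FS _ FZ; rewrite -EX; rewrite -EX in FZ.
    case: Hb => [[k [Hk q]]|Bb]; last by right.
    by left; exists k; split=> //; apply: Hk.
  + move=> Hb; case: (classic (B b)) => Bb; first by right.
    have := Hb _ FZ0; rewrite -EX0; case=> [[k [Xk [xb yb]]]|]//.
    have [nx ny] := K1 b k Bb xb yb.
    left; exists k; split => //; move=> X GX.
    have := Hb _ GX; case=> [[j [Xj [xj yj]]]|]//.
    by rewrite (K2 k j b nx ny xj yj).
Qed.
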